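(* The interactive synthesis algorithm terminates after $O((n+m)\cdot|\bar{P}^*|^2)$ iterations, where $|\bar{P}^*|$ is the number of nodes in the AST of the true program $\bar{P}^*$, $n$ is the number of tables in the database, and $m$ is the number of columns in the database.
   Context: Setting: a DSL of database queries given by a context-free grammar with select, project and inner-join operations; holes are either tables in a sequence of inner-joins (nonterminal $I$) or columns (nonterminal $C$). A sketch is a program with holes; a refinement fills holes with grammar expressions; a completion is a refinement with no holes. $\bar{P}^*$ is the true (user-intended) complete program, assumed derivable from the user's initial sketch, and the user oracle answers $\mathcal{O}(Q)=\mathbb{I}[Q\xRightarrow{*}\bar{P}^*]$. The algorithm keeps a current sketch $P$ and a set $\mathcal{N}$ of rejected questions; each iteration it forms the candidate questions (refinements of $P$ filling one hole, and all same-named holes, with a column $c_i$, a table $t_i$, or $t_i\Join_{C,C}I$) minus $\mathcal{N}$, asks the user about one of them $\hat Q$, and sets $P\gets\hat Q$ if accepted, else adds $\hat Q$ to $\mathcal{N}$; it stops when $P$ has no holes. *)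

(* Defs.v *)
From Stdlib Require Import List Arith Relations.
Import ListNotations.

Inductive colexpr : Type :=
| CHole (h : nat)
| Col (i : nat).

Inductive cmpop : Type := OpEq | OpNeq | OpLt | OpLe | OpGt | OpGe.

Inductive pred : Type :=
| PCmpConst (o : cmpop) (c : colexpr) (v : nat)
| PCmpCol (o : cmpop) (c1 c2 : colexpr)
| PAnd (p1 p2 : pred)
| POr (p1 p2 : pred)
| PNot (p : pred).

Inductive joinexpr : Type :=
| JHole (h : nat)
| JTable (i : nat)
| JJoin (i : nat) (c1 c2 : colexpr) (j : joinexpr).

Inductive query : Type :=
| QProject (cols : list colexpr) (q : query)
| QSelect (p : pred) (q : query)
| QJoin (j : joinexpr).

Definition size_col (c : colexpr) : nat := 1.

Fixpoint size_pred (p : pred) : nat :=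
  match p with
  | PCmpConst _ c _ => 3 + size_col c
  | PCmpCol _ c1 c2 => 2 + size_col c1 + size_col c2
  | PAnd p1 p2 | POr p1 p2 => 1 + size_pred p1 + size_pred p2
  | PNot p => 1 + size_pred p
  end.

Fixpoint size_join (j : joinexpr) : nat :=
  match j with
  | JHole _ => 1
  | JTable _ => 1
  | JJoin _ c1 c2 j => 2 + size_col c1 + size_col c2 + size_join j
  end.

Fixpoint size_query (q : query) : nat :=
  match q with
  | QProject l q => 1 + list_sum (map size_col l) + size_query q
  | QSelect p q => 1 + size_pred p + size_query q
  | QJoin j => size_join j
  end.

Definition choles_col (c : colexpr) : list nat :=
  match c with CHole h => [h] | Col _ => [] end.

Fixpoint choles_pred (p : pred) : list nat :=
  match p with
  | PCmpConst _ c _ => choles_col c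
  | PCmpCol _ c1 c2 => choles_col c1 ++ choles_col c2
  | PAnd p1 p2 | POr p1 p2 => choles_pred p1 ++ choles_pred p2
  | PNot p => choles_pred p
  end.

Fixpoint choles_join (j : joinexpr) : list nat :=
  match j with
  | JHole _ | JTable _ => []
  | JJoin _ c1 c2 j => choles_col c1 ++ choles_col c2 ++ choles_join j
  end.

Fixpoint choles (q : query) : list nat :=
  match q with
  | QProject l q => flat_map choles_col l ++ choles q
  | QSelect p q => choles_pred p ++ choles q
  | QJoin j => choles_join j
  end.

Fixpoint jholes_join (j : joinexpr) : list nat :=
  match j with
  | JHole h => [h]
  | JTable _ => []
  | JJoin _ _ _ j => jholes_join j
  end.

Fixpoint jholes (q : query) : list nat :=
  match q with
  | QProject _ q | QSelect _ q => jholes q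
  | QJoin j => jholes_join j
  end.

Definition has_hole (q : query) : Prop := choles q <> [] \/ jholes q <> [].
Definition complete (q : query) : Prop := choles q = [] /\ jholes q = [].

Definition substC_col (h : nat) (e : colexpr) (c : colexpr) : colexpr :=
  match c with
  | CHole h' => if Nat.eqb h' h then e else c
  | Col _ => c
  end.

Fixpoint substC_pred (h : nat) (e : colexpr) (p : pred) : pred :=
  match p with
  | PCmpConst o c v => PCmpConst o (substC_col h e c) v
  | PCmpCol o c1 c2 => PCmpCol o (substC_col h e c1) (substC_col h e c2)
  | PAnd p1 p2 => PAnd (substC_pred h e p1) (substC_pred h e p2)
  | POr p1 p2 => POr (substC_pred h e p1) (substC_pred h e p2)
  | PNot p => PNot (substC_pred h e p)
  end.

Fixpoint substC_join (h : nat) (e : colexpr) (j : joinexpr) : joinexpr :=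
  match j with
  | JHole _ | JTable _ => j
  | JJoin i c1 c2 j => JJoin i (substC_col h e c1) (substC_col h e c2) (substC_join h e j)
  end.

Fixpoint substC (h : nat) (e : colexpr) (q : query) : query :=
  match q with
  | QProject l q => QProject (map (substC_col h e) l) (substC h e q)
  | QSelect p q => QSelect (substC_pred h e p) (substC h e q)
  | QJoin j => QJoin (substC_join h e j)
  end.

Fixpoint substJ_join (h : nat) (e : joinexpr) (j : joinexpr) : joinexpr :=
  match j with
  | JHole h' => if Nat.eqb h' h then e else j
  | JTable _ => j
  | JJoin i c1 c2 j => JJoin i c1 c2 (substJ_join h e j)
  end.

Fixpoint substJ (h : nat) (e : joinexpr) (q : query) : query :=
  match q with
  | QProject l q => QProject l (substJ h e q)
  | QSelect p q => QSelect p (substJ h e q)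
  | QJoin j => QJoin (substJ_join h e j)
  end.

(* One grammar expansion of one hole name (all occurrences of that name). *)
Definition refine1 (n m : nat) (P Q : query) : Prop :=
  (exists h i, In h (choles P) /\ i < m /\ Q = substC h (Col i) P)
  \/ (exists h i, In h (jholes P) /\ i < n /\ Q = substJ h (JTable i) P)
  \/ (exists h i a b c, In h (jholes P) /\ i < n /\
        ~ In a (choles P) /\ ~ In b (choles P) /\ a <> b /\ ~ In c (jholes P) /\
        Q = substJ h (JJoin i (CHole a) (CHole b) (JHole c)) P).

Definition derives (n m : nat) : query -> query -> Prop :=
  clos_refl_trans query (refine1 n m).

Definition freshC (P : query) : nat := S (list_max (choles P)).
Definition freshJ (P : query) : nat := S (list_max (jholes P)).

Definition candidates (n m : nat) (P : query) : list query :=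
  flat_map (fun h => map (fun i => substC h (Col i) P) (seq 0 m)) (choles P)
  ++ flat_map (fun h =>
        map (fun i => substJ h (JTable i) P) (seq 0 n)
        ++ map (fun i => substJ h (JJoin i (CHole (freshC P)) (CHole (S (freshC P)))
                                          (JHole (freshJ P))) P) (seq 0 n))
       (jholes P).

(* state = (current sketch P, rejected questions N) *)
Definition state : Type := (query * list query)%type.

(* One iteration, with the user oracle O(Q) = [Q =>* Pstar]; the choice of
   the asked question among the candidates is arbitrary. *)
Inductive iter_step (n m : nat) (Pstar : query) : state -> state -> Prop :=
| step_accept (P : query) (N : list query) (Q : query) :
    has_hole P -> In Q (candidates n m P) -> ~ In Q N ->
    derives n m Q Pstar ->
    iter_step n m Pstar (P, N) (Q, N)
| step_reject (P : query) (N : list query) (Q : query) :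
    has_hole P -> In Q (candidates n m P) -> ~ In Q N ->
    ~ derives n m Q Pstar ->
    iter_step n m Pstar (P, N) (P, Q :: N).

Inductive iter_n (n m : nat) (Pstar : query) : nat -> state -> state -> Prop :=
| iter_n_0 s : iter_n n m Pstar 0 s s
| iter_n_S k s1 s2 s3 :
    iter_step n m Pstar s1 s2 -> iter_n n m Pstar k s2 s3 ->
    iter_n n m Pstar (S k) s1 s3.

(* Main.v *)
Require Import Defs.
From Stdlib Require Import List Arith Relations Lia.
Import ListNotations.

Definition hc (q : query) : nat := length (choles q) + length (jholes q).

Lemma size_join_pos j : 1 <= size_join j.
Proof. induction j; simpl; lia. Qed.

Lemma size_query_pos q : 1 <= size_query q.
Proof. induction q; simpl; try lia. apply size_join_pos. Qed.

Lemma hc_pred p : length (choles_pred p) <= size_pred p.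
Proof. induction p; simpl; try rewrite length_app; try (destruct c); try (destruct c1, c2); simpl in *; lia. Qed.

Lemma hc_join j : length (choles_join j) + length (jholes_join j) <= size_join j.
Proof. induction j; simpl; try lia. rewrite !length_app. destruct c1, c2; simpl; unfold size_col; lia. Qed.

Lemma hc_list l : length (flat_map choles_col l) <= list_sum (map size_col l).
Proof. induction l as [|c l IH]; simpl; try lia. rewrite length_app. destruct c; simpl; lia. Qed.

Lemma hc_le q : hc q <= size_query q.
Proof.
  unfold hc; induction q; simpl; try rewrite length_app.
  - pose proof (hc_list cols); lia.
  - pose proof (hc_pred p); lia.
  - apply hc_join.
Qed.

Lemma size_substC h e q : size_query (substC h e q) = size_query q.
Proof.
  assert (Hp : forall p, size_pred (substC_pred h e p) = size_pred p)
    by (induction p; simpl; auto).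
  assert (Hj : forall j, size_join (substC_join h e j) = size_join j)
    by (induction j; simpl; auto).
  induction q; simpl; auto.
  rewrite map_map, IHq. reflexivity.
Qed.

Definition nh (h : nat) := fun x => negb (Nat.eqb x h).

Lemma choles_col_substC h i c : choles_col (substC_col h (Col i) c) = filter (nh h) (choles_col c).
Proof. destruct c as [h'|]; simpl; auto. unfold nh. destruct (h' =? h); simpl; auto. Qed.

Lemma choles_substC h i q : choles (substC h (Col i) q) = filter (nh h) (choles q).
Proof.
  assert (Hp : forall p, choles_pred (substC_pred h (Col i) p) = filter (nh h) (choles_pred p)).
  { induction p; simpl; rewrite ?filter_app, ?choles_col_substC; congruence. }
  assert (Hj : forall j, choles_join (substC_join h (Col i) j) = filter (nh h) (choles_join j)).
  { induction j; simpl; rewrite ?filter_app, ?choles_col_substC; congruence. }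
  induction q; simpl; rewrite ?filter_app; try congruence.
  f_equal; auto. induction cols; simpl; auto. rewrite filter_app, choles_col_substC. congruence.
Qed.

Lemma jholes_substC h e q : jholes (substC h e q) = jholes q.
Proof. induction q; simpl; auto. induction j; simpl; auto. Qed.

Lemma filter_lt h l : In h l -> length (filter (nh h) l) < length l.
Proof.
  induction l as [|x l IH]; simpl; [tauto|]. intros [->|H].
  - unfold nh at 1. rewrite Nat.eqb_refl. simpl. pose proof (filter_length_le (nh h) l). lia.
  - destruct (nh h x); simpl; specialize (IH H); lia.
Qed.

Lemma substJ_join_facts h e j : In h (jholes_join j) ->
  size_join (substJ_join h e j) + 1 = size_join j + size_join e /\
  choles_join (substJ_join h e j) = choles_join j ++ choles_join e /\
  jholes_join (substJ_join h e j) = jholes_join e.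
Proof.
  induction j; simpl; try tauto.
  - intros [->|[]]. rewrite Nat.eqb_refl. simpl. repeat split; auto; lia.
  - intros H. destruct (IHj H) as (A & B & C). repeat split; try lia.
    rewrite B. rewrite !app_assoc. reflexivity. auto.
Qed.

Lemma substJ_facts h e q : In h (jholes q) ->
  size_query (substJ h e q) + 1 = size_query q + size_join e /\
  choles (substJ h e q) = choles q ++ choles_join e /\
  jholes (substJ h e q) = jholes_join e.
Proof.
  induction q; simpl; intros H.
  - destruct (IHq H) as (A & B & C). repeat split; auto; try lia. rewrite B, app_assoc; auto.
  - destruct (IHq H) as (A & B & C). repeat split; auto; try lia. rewrite B, app_assoc; auto.
  - apply substJ_join_facts; auto.
Qed.

Lemma refine1_size n m P Q : refine1 n m P Q -> size_query P <= size_query Q.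
Proof.
  intros [(h & i & H1 & H2 & ->)|[(h & i & H1 & H2 & ->)|(h & i & a & b & c & H1 & _ & _ & _ & _ & _ & ->)]].
  - rewrite size_substC; lia.
  - destruct (substJ_facts h (JTable i) P H1) as (A & _). simpl in A. lia.
  - destruct (substJ_facts h (JJoin i (CHole a) (CHole b) (JHole c)) P H1) as (A & _). simpl in A. lia.
Qed.

Lemma derives_size n m P Q : derives n m P Q -> size_query P <= size_query Q.
Proof.
  induction 1; eauto using refine1_size; lia.
Qed.

Section Ren.
Variables (s t : nat -> nat).
Hypotheses (sinj : forall x y, s x = s y -> x = y) (tinj : forall x y, t x = t y -> x = y).

Definition rcol (c : colexpr) := match c with CHole h => CHole (s h) | Col i => Col i end.
Fixpoint rpred (p : pred) : pred :=
  match p with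
  | PCmpConst o c v => PCmpConst o (rcol c) v
  | PCmpCol o c1 c2 => PCmpCol o (rcol c1) (rcol c2)
  | PAnd p1 p2 => PAnd (rpred p1) (rpred p2)
  | POr p1 p2 => POr (rpred p1) (rpred p2)
  | PNot p => PNot (rpred p)
  end.
Fixpoint rjoin (j : joinexpr) : joinexpr :=
  match j with
  | JHole h => JHole (t h)
  | JTable i => JTable i
  | JJoin i c1 c2 j => JJoin i (rcol c1) (rcol c2) (rjoin j)
  end.
Fixpoint rq (q : query) : query :=
  match q with
  | QProject l q => QProject (map rcol l) (rq q)
  | QSelect p q => QSelect (rpred p) (rq q)
  | QJoin j => QJoin (rjoin j)
  end.

Lemma eqb_inj f (finj : forall x y, f x = f y -> x = y) x y : Nat.eqb (f x) (f y) = Nat.eqb x y.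
Proof.
  destruct (Nat.eqb_spec x y) as [->|Hne]; [apply Nat.eqb_refl|].
  apply Nat.eqb_neq. intro E. apply Hne, finj, E.
Qed.

Lemma choles_rq q : choles (rq q) = map s (choles q).
Proof.
  assert (Hc : forall c, choles_col (rcol c) = map s (choles_col c)) by (destruct c; reflexivity).
  assert (Hp : forall p, choles_pred (rpred p) = map s (choles_pred p))
    by (induction p; simpl; rewrite ?map_app, ?Hc; congruence).
  assert (Hj : forall j, choles_join (rjoin j) = map s (choles_join j))
    by (induction j; simpl; rewrite ?map_app, ?Hc; congruence).
  induction q; simpl; rewrite ?map_app; try congruence.
  f_equal; auto. induction cols; simpl; auto. rewrite map_app, Hc. congruence.
Qed.

Lemma jholes_rq q : jholes (rq q) = map t (jholes q).
Proof. induction q; simpl; auto. induction j; simpl; auto. Qed.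

Lemma rq_substC h i q : rq (substC h (Col i) q) = substC (s h) (Col i) (rq q).
Proof.
  assert (Hc : forall c, rcol (substC_col h (Col i) c) = substC_col (s h) (Col i) (rcol c)).
  { destruct c; simpl; auto. rewrite eqb_inj by auto. destruct (h0 =? h); auto. }
  assert (Hp : forall p, rpred (substC_pred h (Col i) p) = substC_pred (s h) (Col i) (rpred p))
    by (induction p; simpl; rewrite ?Hc; congruence).
  assert (Hj : forall j, rjoin (substC_join h (Col i) j) = substC_join (s h) (Col i) (rjoin j))
    by (induction j; simpl; rewrite ?Hc; congruence).
  induction q; simpl; try congruence.
  rewrite IHq, !map_map. f_equal. apply map_ext. auto.
Qed.

Lemma rq_substJ h e q : rq (substJ h e q) = substJ (t h) (rjoin e) (rq q).
Proof.
  induction q; simpl; try congruence.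
  induction j; simpl; try congruence.
  rewrite eqb_inj by auto. destruct (h0 =? h); auto.
Qed.

Lemma in_map_inj (f : nat -> nat) (finj : forall x y, f x = f y -> x = y) x (l : list nat) : In (f x) (map f l) <-> In x l.
Proof.
  split; [|apply in_map]. intros H. apply in_map_iff in H. destruct H as (y & E & Hy).
  apply finj in E. subst; auto.
Qed.

Lemma refine1_rq n m P Q : refine1 n m P Q -> refine1 n m (rq P) (rq Q).
Proof.
  intros [(h & i & H1 & H2 & ->)|[(h & i & H1 & H2 & ->)|(h & i & a & b & c & H1 & H2 & H3 & H4 & H5 & H6 & ->)]].
  - left. exists (s h), i. rewrite choles_rq, in_map_inj, rq_substC; auto.
  - right; left. exists (t h), i. rewrite jholes_rq, in_map_inj, rq_substJ; auto.
  - right; right. exists (t h), i, (s a), (s b), (t c).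
    rewrite jholes_rq, choles_rq, !in_map_inj, rq_substJ; auto.
    repeat split; auto.
Qed.

Lemma derives_rq n m P Q : derives n m P Q -> derives n m (rq P) (rq Q).
Proof.
  induction 1.
  - apply rt_step, refine1_rq; auto.
  - apply rt_refl.
  - eapply rt_trans; eauto.
Qed.

End Ren.

Lemma rq_fix s t q : (forall x, In x (choles q) -> s x = x) -> (forall x, In x (jholes q) -> t x = x) ->
  rq s t q = q.
Proof.
  assert (Hc : forall c, (forall x, In x (choles_col c) -> s x = x) -> rcol s c = c).
  { destruct c; simpl; auto. }
  assert (Hp : forall p, (forall x, In x (choles_pred p) -> s x = x) -> rpred s p = p).
  { induction p; simpl; intros H; rewrite ?Hc, ?IHp, ?IHp1, ?IHp2; auto;
      intros; apply H; apply in_or_app; auto. }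
  assert (Hj : forall j, (forall x, In x (choles_join j) -> s x = x) -> (forall x, In x (jholes_join j) -> t x = x) -> rjoin s t j = j).
  { induction j; simpl; intros H H'.
    - rewrite H'; auto.
    - auto.
    - rewrite (Hc c1), (Hc c2), IHj; auto.
      + intros; apply H; apply in_or_app; right; apply in_or_app; auto.
      + intros; apply H; apply in_or_app; right; apply in_or_app; auto.
      + intros; apply H; apply in_or_app; auto. }
  induction q; simpl; intros H H'.
  - rewrite IHq; auto. f_equal.
    + assert (Hl : forall x, In x (flat_map choles_col cols) -> s x = x) by (intros; apply H, in_or_app; auto).
      clear -Hl Hc. induction cols; simpl in *; auto. rewrite Hc, IHcols; auto.
      intros; apply Hl, in_or_app; auto. intros; apply Hl, in_or_app; auto.
    + intros; apply H, in_or_app; auto.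
  - rewrite Hp, IHq; auto; intros; apply H, in_or_app; auto.
  - rewrite Hj; auto.
Qed.

Definition qdec : forall x y : query, {x = y} + {x <> y}.
Proof.
  assert (cd : forall x y : colexpr, {x = y} + {x <> y}) by (decide equality; apply Nat.eq_dec).
  assert (od : forall x y : cmpop, {x = y} + {x <> y}) by decide equality.
  assert (pd : forall x y : pred, {x = y} + {x <> y}) by (decide equality; apply Nat.eq_dec).
  assert (jd : forall x y : joinexpr, {x = y} + {x <> y}) by (decide equality; apply Nat.eq_dec).
  decide equality. apply (list_eq_dec cd).
Defined.

Lemma cand_inv n m P Q : In Q (candidates n m P) ->
  (exists h i, In h (choles P) /\ i < m /\ Q = substC h (Col i) P) \/
  (exists h i, In h (jholes P) /\ i < n /\
     (Q = substJ h (JTable i) P \/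
      Q = substJ h (JJoin i (CHole (freshC P)) (CHole (S (freshC P))) (JHole (freshJ P))) P)).
Proof.
  unfold candidates. intros H. apply in_app_or in H. destruct H as [H|H];
    apply in_flat_map in H; destruct H as (h & Hh & H).
  - left. apply in_map_iff in H. destruct H as (i & E & Hi). apply in_seq in Hi.
    exists h, i. repeat split; auto; lia.
  - right. apply in_app_or in H. exists h.
    destruct H as [H|H]; apply in_map_iff in H; destruct H as (i & E & Hi); apply in_seq in Hi;
      exists i; repeat split; auto; lia.
Qed.

Lemma cand_C n m P h i : In h (choles P) -> i < m -> In (substC h (Col i) P) (candidates n m P).
Proof.
  intros. unfold candidates. apply in_or_app; left. apply in_flat_map. exists h; split; auto.
  apply (in_map (fun i => substC h (Col i) P)), in_seq; lia.
Qed.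

Lemma cand_T n m P h i : In h (jholes P) -> i < n -> In (substJ h (JTable i) P) (candidates n m P).
Proof.
  intros. unfold candidates. apply in_or_app; right. apply in_flat_map. exists h; split; auto.
  apply in_or_app; left. apply (in_map (fun i => substJ h (JTable i) P)), in_seq; lia.
Qed.

Lemma cand_J n m P h i : In h (jholes P) -> i < n ->
  In (substJ h (JJoin i (CHole (freshC P)) (CHole (S (freshC P))) (JHole (freshJ P))) P) (candidates n m P).
Proof.
  intros. unfold candidates. apply in_or_app; right. apply in_flat_map. exists h; split; auto.
  apply in_or_app; right.
  apply (in_map (fun i => substJ h (JJoin i (CHole (freshC P)) (CHole (S (freshC P))) (JHole (freshJ P))) P)), in_seq; lia.
Qed.

Lemma length_fm {A B} (f : A -> list B) k l : (forall x, length (f x) = k) -> length (flat_map f l) = k * length l.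
Proof. intros Hf. induction l; simpl; auto. rewrite length_app, Hf, IHl. lia. Qed.

Lemma cand_length n m P : length (candidates n m P) = m * length (choles P) + 2 * n * length (jholes P).
Proof.
  unfold candidates. rewrite length_app, (length_fm _ m), (length_fm _ (2 * n)); auto.
  - intros; rewrite length_app, !length_map, length_seq; lia.
  - intros; rewrite length_map, length_seq; lia.
Qed.

Lemma cand_nil P : candidates 0 0 P = [].
Proof.
  unfold candidates. simpl. induction (choles P); simpl; auto. induction (jholes P); simpl; auto.
Qed.

Lemma accept_ineq n m P Q : In Q (candidates n m P) ->
  2 * size_query P + hc Q + 1 <= 2 * size_query Q + hc P.
Proof.
  intros H. apply cand_inv in H. unfold hc.
  destruct H as [(h & i & Hh & _ & ->) | (h & i & Hh & _ & [ -> | -> ])].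
  - rewrite size_substC, choles_substC, jholes_substC. pose proof (filter_lt h _ Hh). lia.
  - destruct (substJ_facts h (JTable i) P Hh) as (A & B & C). rewrite B, C. simpl in *.
    rewrite app_nil_r. destruct (jholes P); simpl in *; [tauto|lia].
  - destruct (substJ_facts h (JJoin i (CHole (freshC P)) (CHole (S (freshC P))) (JHole (freshJ P))) P Hh)
      as (A & B & C). rewrite B, C, length_app. simpl in *.
    destruct (jholes P); simpl in *; [tauto|lia].
Qed.

Definition swap (u v x : nat) := if Nat.eqb x u then v else if Nat.eqb x v then u else x.

Lemma swap_inj u v x y : swap u v x = swap u v y -> x = y.
Proof.
  unfold swap. destruct (Nat.eqb_spec x u), (Nat.eqb_spec x v), (Nat.eqb_spec y u), (Nat.eqb_spec y v); lia.
Qed.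

Lemma swap_l u v : swap u v u = v.
Proof. unfold swap. rewrite Nat.eqb_refl. auto. Qed.
Lemma swap_r u v : swap u v v = u.
Proof. unfold swap. destruct (Nat.eqb_spec v u); subst; auto. rewrite Nat.eqb_refl; auto. Qed.
Lemma swap_o u v x : x <> u -> x <> v -> swap u v x = x.
Proof. unfold swap. intros. destruct (Nat.eqb_spec x u), (Nat.eqb_spec x v); lia. Qed.

Lemma fresh_lt (l : list nat) x : In x l -> x < S (list_max l).
Proof.
  intros H. assert (Hm : list_max l <= list_max l) by lia. apply list_max_le in Hm.
  rewrite Forall_forall in Hm. specialize (Hm x H). lia.
Qed.

Lemma good_candidate n m P Pstar : derives n m P Pstar -> complete Pstar -> has_hole P ->
  exists Q, In Q (candidates n m P) /\ derives n m Q Pstar.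
Proof.
  intros D Hc Hh. apply clos_rt_rt1n in D. destruct D as [|P1 z R1 D1].
  { destruct Hc as [C1 C2]. destruct Hh; contradiction. }
  apply clos_rt1n_rt in D1.
  destruct R1 as [(h & i & H1 & H2 & ->)|[(h & i & H1 & H2 & ->)|(h & i & a & b & c & H1 & H2 & H3 & H4 & H5 & H6 & ->)]].
  - eexists; split; [apply cand_C; eauto|auto].
  - eexists; split; [apply cand_T; eauto|auto].
  - set (f := freshC P). set (fj := freshJ P).
    set (b' := swap a f b).
    set (s := fun x => swap b' (S f) (swap a f x)).
    set (t := swap c fj).
    assert (sinj : forall x y, s x = s y -> x = y) by (intros x y E; apply swap_inj, swap_inj in E; auto).
    assert (tinj : forall x y, t x = t y -> x = y) by (intros x y E; apply swap_inj in E; auto).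
    apply (derives_rq s t sinj tinj) in D1.
    rewrite (rq_fix s t z) in D1 by (destruct Hc as [C1 C2]; rewrite ?C1, ?C2; simpl; tauto).
    rewrite rq_substJ in D1 by auto.
    assert (Hf : forall x, In x (choles P) -> x < f) by (intros; apply fresh_lt; auto).
    assert (Hfj : forall x, In x (jholes P) -> x < fj) by (intros; apply fresh_lt; auto).
    rewrite (rq_fix s t P) in D1.
    2:{ intros x Hx. specialize (Hf x Hx). unfold s.
        assert (x <> a) by (intro; subst; auto).
        rewrite (swap_o a f x) by lia. apply swap_o; [|lia].
        unfold b'. unfold swap. destruct (Nat.eqb_spec b a); [lia|].
        destruct (Nat.eqb_spec b f); [auto|]. intro; subst; auto. }
    2:{ intros x Hx. specialize (Hfj x Hx). unfold t. apply swap_o; [|lia]. intro; subst; auto. }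
    assert (Eh : t h = h) by (unfold t; apply swap_o; [intro; subst; auto| specialize (Hfj h H1); lia]).
    rewrite Eh in D1. simpl in D1.
    assert (Ea : s a = f).
    { unfold s. rewrite swap_l. apply swap_o; [|lia]. unfold b', swap.
      destruct (Nat.eqb_spec b a); [lia|]. destruct (Nat.eqb_spec b f); lia. }
    assert (Eb : s b = S f) by (unfold s; fold b'; apply swap_l).
    assert (Ec : t c = fj) by (unfold t; apply swap_l).
    rewrite Ea, Eb, Ec in D1.
    eexists; split; [apply cand_J; eauto|exact D1].
Qed.

Definition notin (N : list query) (q : query) : bool := if in_dec qdec q N then false else true.

Lemma filter_strict (l : list query) (f g : query -> bool) :
  (forall x, In x l -> g x = true -> f x = true) ->
  (exists x, In x l /\ f x = true /\ g x = false) ->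
  length (filter g l) < length (filter f l).
Proof.
  induction l as [|y l IH]; simpl; intros Hfg (x & Hx & Fx & Gx); [tauto|].
  assert (Hle : forall l', (forall x, In x l' -> g x = true -> f x = true) -> length (filter g l') <= length (filter f l')).
  { induction l'; simpl; auto. intros H. destruct (g a) eqn:Ga.
    - rewrite (H a (or_introl eq_refl) Ga). simpl. specialize (IHl' (fun x Hx => H x (or_intror Hx))). lia.
    - destruct (f a); simpl; specialize (IHl' (fun x Hx => H x (or_intror Hx))); lia. }
  destruct Hx as [->|Hx].
  - rewrite Fx, Gx. simpl. specialize (Hle l (fun x Hx => Hfg x (or_intror Hx))). lia.
  - specialize (IH (fun x Hx => Hfg x (or_intror Hx)) (ex_intro _ x (conj Hx (conj Fx Gx)))).
    destruct (g y) eqn:Gy.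
    + rewrite (Hfg y (or_introl eq_refl) Gy). simpl. lia.
    + destruct (f y); simpl; lia.
Qed.

Section Bound.
Variables (n m : nat) (Pstar : query).
Let S := size_query Pstar.
Let B := (m + 2 * n) * S.
Definition W (P : query) := 2 * S + hc P - 2 * size_query P.
Definition r (P : query) (N : list query) := length (filter (notin N) (candidates n m P)).
Definition Phi (s : state) := W (fst s) * (B + 1) + r (fst s) (snd s).

Lemma r_le P N : size_query P <= S -> r P N <= B.
Proof.
  intros H. unfold r, B. pose proof (filter_length_le (notin N) (candidates n m P)).
  rewrite cand_length in H0. pose proof (hc_le P). unfold hc in H1. nia.
Qed.

Lemma step_dec P N P' N' : iter_step n m Pstar (P, N) (P', N') -> size_query P <= S ->
  size_query P' <= S /\ Phi (P', N') < Phi (P, N).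
Proof.
  intros Hs HP. inversion Hs; subst.
  - pose proof (derives_size _ _ _ _ H6) as HQ. fold S in HQ. split; auto.
    pose proof (accept_ineq _ _ _ _ H4). pose proof (r_le P' N' HQ).
    unfold Phi; simpl. unfold W.
    remember (r P' N') as rq. remember (r P N') as rp. clear Heqrq Heqrp.
    assert (2 * S + hc P' - 2 * size_query P' + 1 <= 2 * S + hc P - 2 * size_query P) by lia.
    remember (2 * S + hc P' - 2 * size_query P') as wq.
    remember (2 * S + hc P - 2 * size_query P) as wp. nia.
  - split; auto. unfold Phi; simpl. apply Nat.add_lt_mono_l. unfold r.
    apply filter_strict.
    + intros x _. unfold notin. destruct (in_dec qdec x (Q :: N)), (in_dec qdec x N); simpl in *; auto.
    + exists Q. split; auto. unfold notin. destruct (in_dec qdec Q N); [contradiction|].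
      destruct (in_dec qdec Q (Q :: N)); auto. exfalso; simpl in *; auto.
Qed.

Lemma iter_bound k : forall P N s, iter_n n m Pstar k (P, N) s -> size_query P <= S -> k <= Phi (P, N).
Proof.
  induction k; intros P N s H HP; [lia|].
  inversion H; subst. destruct s2 as [P' N'].
  destruct (step_dec _ _ _ _ H1 HP) as [HP' Hlt].
  specialize (IHk _ _ _ H2 HP'). lia.
Qed.
End Bound.

Theorem theorem2 :
  exists C : nat,
    forall (n m : nat) (P0 Pstar : query),
      complete Pstar ->
      derives n m P0 Pstar ->
      (* every execution performs O((n+m) |Pstar|^2) iterations *)
      (forall (k : nat) (s : state),
          iter_n n m Pstar k (P0, []) s ->
          k <= C * (n + m) * (size_query Pstar) ^ 2)
      /\
      (* and never gets stuck: while the sketch has holes an iteration is possible *)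
      (forall s : state,
          clos_refl_trans state (iter_step n m Pstar) (P0, []) s ->
          has_hole (fst s) ->
          exists s', iter_step n m Pstar s s').
Proof.
  exists 20. intros n m P0 Pstar Hc HD. split.
  - intros k s H. destruct k as [|k]; [lia|].
    assert (Hnm : 1 <= n + m).
    { inversion H; subst. inversion H1; subst;
      (destruct n, m; [rewrite cand_nil in *; simpl in *; contradiction|lia|lia|lia]). }
    pose proof (derives_size _ _ _ _ HD) as HS.
    pose proof (iter_bound n m Pstar _ _ _ _ H HS) as Hk.
    pose proof (r_le n m Pstar P0 [] HS) as Hr.
    pose proof (hc_le P0). pose proof (size_query_pos Pstar).
    unfold Phi, W in Hk; cbn [fst snd] in Hk.
    remember (size_query Pstar) as S. remember (r n m P0 []) as rr. clear HeqS Heqrr.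
    assert (2 * S + hc P0 - 2 * size_query P0 <= 3 * S) by lia.
    remember (2 * S + hc P0 - 2 * size_query P0) as w. clear Heqw.
    rewrite Nat.pow_2_r. nia.
  - intros s Hr.
    assert (Inv : derives n m (fst s) Pstar /\ forall q, In q (snd s) -> ~ derives n m q Pstar).
    { apply clos_rt_rt1n in Hr. remember (P0, @nil query) as s0.
      assert (I0 : derives n m (fst s0) Pstar /\ forall q, In q (snd s0) -> ~ derives n m q Pstar)
        by (subst; simpl; split; auto).
      clear Heqs0. induction Hr; auto. apply IHHr.
      destruct I0 as [I1 I2]. inversion H; subst; simpl in *; split; auto.
      intros q [<-|Hq]; auto. }
    intros Hh. destruct s as [P N]. destruct Inv as [I1 I2]; simpl in *.
    destruct (good_candidate _ _ _ _ I1 Hc Hh) as (Q & HQ & DQ).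
    exists (Q, N). apply step_accept; auto.
    intro HN. apply (I2 Q HN DQ).
Qed.
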